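(* Let $n\ge 1$ and let $G_n$ be the graph consisting of two edges $e_l=(x_1,v_l)$ and $e_r=(x_2,v_r)$ connected by an $H_n$, where $x_1,x_2$ are distinct new vertices not in the $H_n$. Then $G_n$ is $(n+1)$-edge-colorable, but every edge coloring of $G_n$ in which $e_l$ and $e_r$ receive different colors uses at least $n+2$ colors.
   Context: For $n\ge1$, the graph $H_n$ consists of a complete bipartite graph $K_{n,n}$ with bipartition $(L,R)$, $|L|=|R|=n$, together with two further vertices $v_l,v_r$ and the edges $(v_l,v)$ for all $v\in L$ and $(v_r,v)$ for all $v\in R$; $v_l$ is its leftmost vertex and $v_r$ its rightmost vertex. Two edges $(x_1,y_1)$ and $(x_2,y_2)$ are connected by an $H_n$ if $y_1$ is the leftmost and $y_2$ the rightmost vertex of the same copy of $H_n$, and neither $x_1$ nor $x_2$ belongs to that copy. A graph is $k$-edge-colorable if it has a proper edge coloring with at most $k$ colors. *)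

(* Defs.v *)
From mathcomp Require Import all_boot.
Set Implicit Arguments. Unset Strict Implicit. Unset Printing Implicit Defensive.

(* Vertices of G_n:  inl (inl i) = i-th vertex of L,  inl (inr j) = j-th vertex of R,
   inr 0 = x1, inr 1 = v_l, inr 2 = v_r, inr 3 = x2. *)
Definition Vn (n : nat) : finType := (('I_n + 'I_n) + 'I_4)%type.

Definition x1 {n} : Vn n := inr (@Ordinal 4 0 isT).
Definition vl {n} : Vn n := inr (@Ordinal 4 1 isT).
Definition vr {n} : Vn n := inr (@Ordinal 4 2 isT).
Definition x2 {n} : Vn n := inr (@Ordinal 4 3 isT).

(* One orientation of every edge of G_n. *)
Definition Gbase n (u v : Vn n) : bool :=
  match u, v with
  | inl (inl _), inl (inr _) => true                       (* K_{n,n} between L and R *)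
  | inr a, inl (inl _) => val a == 1
  | inr a, inl (inr _) => val a == 2
  | inr a, inr b => ((val a == 0) && (val b == 1))
                 || ((val a == 3) && (val b == 2))
  | _, _ => false
  end.

Definition Gadj n : rel (Vn n) := fun u v => Gbase u v || Gbase v u.

(* A proper edge coloring of the simple graph (V, adj) with colors in 'I_k:
   c is read on ordered pairs, must be symmetric on edges, and any two
   distinct edges sharing an endpoint get different colors. *)
Definition edge_coloring (V : finType) (adj : rel V) (k : nat) (c : V -> V -> 'I_k) : Prop :=
  (forall x y, adj x y -> c x y = c y x) /\
  (forall x y z, adj x y -> adj x z -> y != z -> c x y != c x z).

(* Main.v *)
Require Import Defs.
From mathcomp Require Import all_boot.
From mathcomp Require Import zify.

Definition md n x := if x < n.+1 then x else x - n.+1.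

Definition cv n (u v : Vn n) : nat :=
  match u, v with
  | inl (inl i), inl (inr j) | inl (inr j), inl (inl i) => md n (i + j)
  | inr _, inl (inl i) | inl (inl i), inr _ => md n (i + n)
  | inr _, inl (inr j) | inl (inr j), inr _ => md n (j + n)
  | inr _, inr _ => n - 1
  | _, _ => 0
  end.

Ltac bnd := repeat match goal with |- context [nat_of_ord ?i] => move: (ltn_ord i); generalize (nat_of_ord i) end.
Ltac fin := rewrite /md; bnd; intros;
  repeat match goal with
  | |- context [if ?a < ?b then _ else _] => case: (ltnP a b) => ?
  | H : context [if ?a < ?b then _ else _] |- _ => move: H; case: (ltnP a b) => ? H
  end; lia.

Lemma cv_lt n u v : cv n u v < n.+1.
Proof. case: u => [[i|j]|a]; case: v => [[i'|j']|b] /=; fin. Qed.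
Lemma col_proper n (hn : 1 <= n) : forall (x y z : Vn n),
  @Gadj n x y -> @Gadj n x z -> cv n x y = cv n x z -> y = z.
Proof.
move=> [[i|j]|[[|[|[|[|a]]]] ha]] [[i'|j']|[[|[|[|[|b]]]] hb]] [[i''|j'']|[[|[|[|[|c]]]] hc]] //= _ _.
all: try first [ solve [move=> _; congr inr; exact: val_inj]
           | solve [move=> E; congr (inl (inl _)); apply: val_inj => /=; move: E; fin]
           | solve [move=> E; congr (inl (inr _)); apply: val_inj => /=; move: E; fin]
           | solve [move=> E; exfalso; move: E; fin] ].

Qed.

Lemma allc n k (c : Vn n -> Vn n -> 'I_k) (x : Vn n) (nb : option 'I_n -> Vn n) :
 (forall x y z, @Gadj n x y -> @Gadj n x z -> y != z -> c x y != c x z) ->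
 (forall o, @Gadj n x (nb o)) -> injective nb ->
 n.+1 <= k /\ (k <= n.+1 -> forall a, exists o, c x (nb o) = a).
Proof.
move=> cpr adj inj.
have ginj : injective (fun o => c x (nb o)).
  move=> o o' /= E; apply: inj; apply/eqP; apply/negPn/negP.
  by move/(cpr _ _ _ (adj o) (adj o')); rewrite E eqxx.
have hc := leq_card _ ginj; rewrite card_option !card_ord in hc.
split=> // hk a.
have := inj_card_onto ginj; rewrite card_option !card_ord => /(_ hk a) /codomP [o Eo].
by exists o; rewrite Eo.
Qed.

Theorem lemma2 (n : nat) (hn : 1 <= n) :
  (exists c : Vn n -> Vn n -> 'I_n.+1, edge_coloring (@Gadj n) c) /\
  (forall (k : nat) (c : Vn n -> Vn n -> 'I_k),
      edge_coloring (@Gadj n) c -> c x1 vl != c x2 vr -> n.+2 <= k).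
Proof.
split.
  exists (fun u v => inord (cv n u v)); split.
    by move=> [[i|j]|a] [[i'|j']|b].
  move=> x y z hxy hxz hyz; apply/negP => /eqP E.
  have E' : cv n x y = cv n x z by move: (congr1 (@nat_of_ord _) E); rewrite !inordK ?cv_lt.
  by move: hyz; rewrite (@col_proper n hn x y z hxy hxz E') eqxx.
move=> k c [csym cpr] hne.
rewrite leqNgt; apply/negP => hk.
set a := c x1 vl.
pose L (i : 'I_n) : Vn n := inl (inl i).
pose R (j : 'I_n) : Vn n := inl (inr j).
have H1 : forall i, exists j, c (L i) (R j) == a.
  move=> i.
  pose nb (o : option 'I_n) : Vn n := if o is Some j then R j else vl.
  have adj : forall o, @Gadj n (L i) (nb o) by case.
  have inj : injective nb by move=> [j|] [j'|] //= [->].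
  have [_ /(_ hk a) [[j|] Hj]] := @allc n k c _ _ cpr adj inj; first by exists j; apply/eqP.
  exfalso; move: Hj => /=.
  rewrite (csym (L i) vl) // /a (csym x1 vl) //.
  by move/eqP; apply/negP; apply: (cpr vl (L i) x1).
pose f i := xchoose (H1 i).
have finj : injective f.
  move=> i i' E; apply/eqP; apply/negPn/negP => ne.
  have h1 := xchooseP (H1 i); have h2 := xchooseP (H1 i').
  rewrite -/(f i) -/(f i') -E in h1 h2.
  have := cpr (R (f i)) (L i) (L i') (erefl _) (erefl _).
  have ne' : L i != L i' by apply: contra ne => /eqP [->].
  by rewrite -(csym (L i)) // -(csym (L i')) // (eqP h1) (eqP h2) eqxx => /(_ ne').
have [j0 Hj0] : exists j, c vr (R j) = a.
  pose nb (o : option 'I_n) : Vn n := if o is Some j then R j else x2.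
  have adj : forall o, @Gadj n vr (nb o) by case.
  have inj : injective nb by move=> [j|] [j'|] //= [->].
  have [_ /(_ hk a) [[j|] Hj]] := @allc n k c _ _ cpr adj inj; first by exists j.
  by move: hne; rewrite -/a -Hj /= (csym vr x2) // eqxx.
have := inj_card_onto finj (leqnn _) j0 => /codomP [i Ei].
have h1 := xchooseP (H1 i); rewrite -/(f i) -Ei in h1.
have := cpr (R j0) (L i) vr (erefl _) (erefl _) (erefl _).
by rewrite -(csym (L i)) // -(csym vr) // (eqP h1) Hj0 eqxx.
Qed.
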